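(* Let $1\le d<n$, $r=d(n-d)$, and let $\mathfrak C:\underline i_r>\underline i_{r-1}>\cdots>\underline i_0$ be a maximal chain in $I(d,n)$. Then there exists $0\le k<r$ such that $\underline i_h$ does not contain $n$ for all $h\le k$ and $\underline i_h$ contains $n$ for all $h>k$. Moreover, if $\underline i_k=i_{1,k}i_{2,k}\cdots i_{d,k}$, then $i_{d,k}=n-1$ and $\underline i_{k+1}=i_{1,k}\cdots i_{d-1,k}\,n$.
   Context: $I(d,n)$ is the set of $d$-element subsets of $\{1,\dots,n\}$, written as increasing sequences $i_1i_2\cdots i_d$, partially ordered by $\underline i\le \underline j$ iff $i_k\le j_k$ for all $k$. A maximal chain is a totally ordered subset maximal with respect to inclusion; it has the form $\underline i_r>\cdots>\underline i_0$ with $\underline i_0=12\cdots d$, $\underline i_r=(n-d+1)\cdots n$, each relation a cover. *)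

(* Defs.v *)
From mathcomp Require Import all_boot.
Set Implicit Arguments. Unset Strict Implicit. Unset Printing Implicit Defensive.

(* Elements of I(d,n): d-element subsets of {1,...,n}, represented as subsets of
   'I_n.+1 = {0,...,n} not containing 0 (so numbering is literal). *)
Definition Idn (d n : nat) : {set {set 'I_n.+1}} :=
  [set A : {set 'I_n.+1} | (#|A| == d) && (ord0 \notin A)].

Arguments Idn : clear implicits.

Definition seqI (n : nat) (A : {set 'I_n.+1}) : seq nat :=
  sort leq [seq val x | x in A].

Definition leI (n : nat) (A B : {set 'I_n.+1}) : bool :=
  all2 leq (seqI A) (seqI B).

Definition ltI (n : nat) (A B : {set 'I_n.+1}) : bool :=
  (A != B) && leI A B.

Definition is_chain (d n : nat) (C : {set {set 'I_n.+1}}) : Prop :=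
  C \subset Idn d n /\ (forall A B, A \in C -> B \in C -> leI A B || leI B A).

Arguments is_chain : clear implicits.

Definition maximal_chain (d n : nat) (C : {set {set 'I_n.+1}}) : Prop :=
  is_chain d n C /\
  (forall C', is_chain d n C' -> C \subset C' -> C' = C).
Arguments maximal_chain : clear implicits.

(* Main.v *)
Require Import Defs.
From mathcomp Require Import all_boot zify.
Set Implicit Arguments. Unset Strict Implicit.

Lemma all2_size (s t : seq nat) : all2 leq s t -> size s = size t.
Proof. by elim: s t => [|x s IH] [|y t] //= /andP[_ /IH ->]. Qed.

Lemma all2_nth (s t : seq nat) i : all2 leq s t -> i < size s ->
  nth 0 s i <= nth 0 t i.
Proof.
elim: s t i => [|x s IH] [|y t] [|i] //= /andP[xy st] hi //.
exact: IH.
Qed.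

Lemma all2_of_nth (s t : seq nat) : size s = size t ->
  (forall i, i < size s -> nth 0 s i <= nth 0 t i) -> all2 leq s t.
Proof.
elim: s t => [|x s IH] [|y t] //= [e] H.
rewrite (H 0 erefl) /=; apply: IH => // i hi; exact: (H i.+1).
Qed.

Lemma all2_leq_sum (s t : seq nat) : all2 leq s t -> s = t \/ sumn s < sumn t.
Proof.
elim: s t => [|x s IH] [|y t] //=; first by left.
move=> /andP[xy /IH [->|lt]].
- have [->|ne] := eqVneq x y; [by left | right; lia].
- right; lia.
Qed.

Lemma all2_last (s t : seq nat) d : size s = d -> 0 < d -> all2 leq s t ->
  sumn t <= (sumn s).+1 -> nth 0 s d.-1 != nth 0 t d.-1 ->
  t = rcons (take d.-1 s) (nth 0 t d.-1) /\ nth 0 t d.-1 = (nth 0 s d.-1).+1.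
Proof.
move=> hs hd st; have := all2_size st; move: st hs.
case/lastP: s => [|s a]; first by move=> _ hs; rewrite -hs in hd.
case/lastP: t => [|t b]; first by rewrite !size_rcons.
rewrite !size_rcons => st hs [e]; subst d.
rewrite /= !nth_rcons -e ltnn eqxx -[rcons s a]cats1 take_size_cat //.
have st' : all2 leq s t /\ a <= b.
  elim: s t e st {hd} => [|x s IH] [|y t] //=; first by move=> _ /andP[].
  by move=> [/IH h] /andP[-> /h].
case: st' => [st' ab]; rewrite ?cats1 !sumn_rcons => hsum ne.
case: (all2_leq_sum st') => [e2|lt]; first by subst t; split=> //; lia.
lia.
Qed.

Lemma seqI_mem n (A : {set 'I_n.+1}) (x : 'I_n.+1) : (val x \in seqI A) = (x \in A).
Proof. by rewrite /seqI mem_sort /image_mem (mem_map val_inj) mem_enum. Qed.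

Lemma seqI_inj n (A B : {set 'I_n.+1}) : seqI A = seqI B -> A = B.
Proof. by move=> e; apply/setP=> x; rewrite -!seqI_mem e. Qed.

Lemma seqI_size n (A : {set 'I_n.+1}) : size (seqI A) = #|A|.
Proof. by rewrite /seqI size_sort size_image. Qed.

Lemma seqI_sorted n (A : {set 'I_n.+1}) : sorted ltn (seqI A).
Proof.
rewrite ltn_sorted_uniq_leq sort_uniq sort_sorted ?andbT; last exact: leq_total.
rewrite /image_mem (map_inj_uniq val_inj); exact: enum_uniq.
Qed.

Lemma seqI_range n (A : {set 'I_n.+1}) x : ord0 \notin A -> x \in seqI A ->
  0 < x <= n.
Proof.
move=> h0; rewrite /seqI mem_sort /image_mem => /mapP [y]; rewrite mem_enum => yA ->.
apply/andP; split; last by have := ltn_ord y.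
rewrite lt0n; apply/negP => /eqP y0.
have : y = ord0 by apply: val_inj.
by move=> ey; rewrite -ey yA in h0.
Qed.

Lemma sorted_gap (s : seq nat) i j : sorted ltn s -> i <= j -> j < size s ->
  nth 0 s i + (j - i) <= nth 0 s j.
Proof.
move=> ss ij; elim: j ij => [|j IH] ij hj.
  by move: ij; rewrite leqn0 => /eqP ->; rewrite addn0.
move: ij; rewrite leq_eqVlt => /orP [/eqP ->|ij]; first by rewrite subnn addn0.
have h1 := IH ij (ltnW hj).
have h2 : nth 0 s j < nth 0 s j.+1.
  by apply: (sorted_ltn_nth ltn_trans) => //; rewrite inE ltnW.
lia.
Qed.

Lemma seq_bounds (s : seq nat) d n : sorted ltn s -> size s = d ->
  (forall x, x \in s -> 0 < x <= n) -> forall i, i < d ->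
  i.+1 <= nth 0 s i /\ nth 0 s i + (d - i.+1) <= n.
Proof.
move=> ss sz hr i id.
have hs0 : 0 < size s by lia.
have hs1 : d.-1 < size s by lia.
have m0 : 0 < nth 0 s 0 <= n := hr _ (mem_nth 0 hs0).
have ml : 0 < nth 0 s d.-1 <= n := hr _ (mem_nth 0 hs1).
have g1 := @sorted_gap s 0 i ss (leq0n _) ltac:(lia).
have g2 := @sorted_gap s i d.-1 ss ltac:(lia) ltac:(lia).
case/andP: m0 => m0a m0b; case/andP: ml => mla mlb; split; lia.
Qed.

Lemma sumn_shift (t : seq nat) m :
  sumn [seq i.+1 + m | i <- t] = sumn [seq i.+1 | i <- t] + size t * m.
Proof. elim: t => [|x t IH] //=; rewrite IH; lia. Qed.

Lemma Idn_facts d n (A : {set 'I_n.+1}) : A \in Idn d n ->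
  [/\ size (seqI A) = d, sorted ltn (seqI A) &
      forall x, x \in seqI A -> 0 < x <= n].
Proof.
rewrite inE => /andP[/eqP hc h0]; split.
- by rewrite seqI_size.
- exact: seqI_sorted.
- by move=> x; apply: seqI_range.
Qed.

Lemma seqI_mem_nat n (A : {set 'I_n.+1}) x : x <= n ->
  (x \in seqI A) = ((inord x : 'I_n.+1) \in A).
Proof. by move=> hx; rewrite -seqI_mem /= inordK. Qed.

Lemma Idn_memn d n (A : {set 'I_n.+1}) : 0 < d -> A \in Idn d n ->
  ((inord n : 'I_n.+1) \in A) = (nth 0 (seqI A) d.-1 == n).
Proof.
move=> hd hA; case: (Idn_facts hA) => sz ss hr.
transitivity (n \in seqI A); first by rewrite (seqI_mem_nat A (leqnn n)).
have hs1 : d.-1 < size (seqI A) by lia.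
have ml : 0 < nth 0 (seqI A) d.-1 <= n := hr _ (mem_nth 0 hs1).
apply/idP/eqP => [hn|e]; last by have := mem_nth 0 hs1; rewrite e.
have hj : index n (seqI A) < size (seqI A) by rewrite index_mem.
have := nth_index 0 hn.
have g := @sorted_gap (seqI A) (index n (seqI A)) d.-1 ss ltac:(lia) hs1.
move=> e; rewrite e in g; lia.
Qed.

Theorem proposition2p8 (d n : nat) (hd : 1 <= d) (hdn : d < n)
  (c : nat -> {set 'I_n.+1})
  (hdec : forall h, h < d * (n - d) -> ltI (c h) (c h.+1))
  (hmax : maximal_chain d n [set c (val h) | h : 'I_(d * (n - d)).+1]) :
  exists k, [/\ k < d * (n - d),
    (forall h, h <= k -> (inord n : 'I_n.+1) \notin c h),
    (forall h, k < h <= d * (n - d) -> (inord n : 'I_n.+1) \in c h),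
    nth 0 (seqI (c k)) d.-1 = n.-1 &
    seqI (c k.+1) = rcons (take d.-1 (seqI (c k))) n].
Proof.
set r := d * (n - d).
have hin : forall h, h <= r -> c h \in Idn d n.
  move=> h hh; case: hmax => [[sub _] _]; apply: (subsetP sub).
  by apply/imsetP; exists (Ordinal (hh : h < r.+1)).
set lo := [seq i.+1 | i <- iota 0 d].
set hi := [seq i.+1 + (n - d) | i <- iota 0 d].
have szlo : size lo = d by rewrite size_map size_iota.
have szhi : size hi = d by rewrite size_map size_iota.
have nlo : forall i, i < d -> nth 0 lo i = i.+1.
  by move=> i hi'; rewrite (nth_map 0) ?size_iota // nth_iota.
have nhi : forall i, i < d -> nth 0 hi i = i.+1 + (n - d).
  by move=> i hi'; rewrite (nth_map 0) ?size_iota // nth_iota.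
have sumhi : sumn hi = sumn lo + r by rewrite /hi /lo sumn_shift size_iota.
have hsz : forall h, h <= r -> size (seqI (c h)) = d.
  by move=> h hh; case: (Idn_facts (hin h hh)).
have hlo : forall h, h <= r -> all2 leq lo (seqI (c h)).
  move=> h hh; case: (Idn_facts (hin h hh)) => sz ss hr.
  apply: all2_of_nth; first by rewrite szlo sz.
  move=> i; rewrite szlo => hi'; rewrite nlo //.
  by case: (seq_bounds ss sz hr hi').
have hhi : forall h, h <= r -> all2 leq (seqI (c h)) hi.
  move=> h hh; case: (Idn_facts (hin h hh)) => sz ss hr.
  apply: all2_of_nth; first by rewrite szhi sz.
  move=> i; rewrite sz => hi'; rewrite nhi //.
  case: (seq_bounds ss sz hr hi') => _; lia.
have hstep : forall h, h < r -> all2 leq (seqI (c h)) (seqI (c h.+1)) /\ sumn (seqI (c h)) < sumn (seqI (c h.+1)).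
  move=> h hh; have := hdec h hh; rewrite /ltI /leI => /andP[ne le].
  split => //; case: (all2_leq_sum le) => // e.
  by move: ne; rewrite (seqI_inj e) eqxx.
have hgap : forall i j, i <= j <= r -> sumn (seqI (c i)) + (j - i) <= sumn (seqI (c j)).
  move=> i j /andP[ij jr]; elim: j ij jr => [|j IH] ij jr.
    have -> : i = 0 by lia.
    by rewrite addn0.
  move: ij; rewrite leq_eqVlt => /orP [/eqP ->|ij]; first by rewrite subnn addn0.
  have := IH ij (ltnW jr); have := (hstep j jr).2; lia.
have hsum : forall h, h <= r -> sumn (seqI (c h)) = sumn lo + h.
  move=> h hh.
  have a1 := hgap 0 h ltac:(lia). have a2 := hgap h r ltac:(lia).
  have b1 : sumn lo <= sumn (seqI (c 0)).
    by case: (all2_leq_sum (hlo 0 (leq0n _))) => [->|]; lia.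
  have b2 : sumn (seqI (c r)) <= sumn hi.
    by case: (all2_leq_sum (hhi r (leqnn _))) => [->|]; lia.
  lia.
have s0 : seqI (c 0) = lo.
  case: (all2_leq_sum (hlo 0 (leq0n _))) => // lt.
  have := hsum 0 (leq0n _); lia.
have sr : seqI (c r) = hi.
  case: (all2_leq_sum (hhi r (leqnn _))) => // lt.
  have := hsum r (leqnn _); lia.
pose Q h := nth 0 (seqI (c h)) d.-1 == n.
have hPQ : forall h, h <= r -> ((inord n : 'I_n.+1) \in c h) = Q h.
  by move=> h hh; rewrite (Idn_memn hd (hin h hh)).
have Q0 : ~~ Q 0.
  by rewrite /Q s0 nlo; lia.
have Qr : Q r.
  by rewrite /Q sr nhi; lia.
have Qmono : forall h, h < r -> Q h -> Q h.+1.
  move=> h hh; rewrite /Q => /eqP e.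
  have l1 : nth 0 (seqI (c h)) d.-1 <= nth 0 (seqI (c h.+1)) d.-1.
    by apply: all2_nth; [exact: (hstep h hh).1 | rewrite hsz //; lia].
  case: (Idn_facts (hin h.+1 hh)) => sz ss hr.
  have l2 : d.-1 < d by lia.
  case: (seq_bounds ss sz hr l2) => _ l3.
  apply/eqP; lia.
have Qex : exists h, Q h by exists r.
case: (ex_minnP Qex) => m Qm minm.
have m0 : 0 < m by case: m Qm {minm} => // Q0'; rewrite Q0' in Q0.
have mr : m <= r by apply: minm.
have Qup : forall j, m + j <= r -> Q (m + j).
  elim=> [|j IH] hj; first by rewrite addn0.
  rewrite addnS; apply: Qmono; first lia.
  apply: IH; lia.
have hk : m.-1 < r by lia.
have em : m.-1.+1 = m by lia.
have Qk : ~~ Q m.-1 by apply/negP => Qh; have := minm _ Qh; lia.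
have Qm' : Q m.-1.+1 by rewrite em.
have hsk := hsum m.-1 (ltnW hk). have hsk1 := hsum m.-1.+1 hk.
have ne : nth 0 (seqI (c m.-1)) d.-1 != nth 0 (seqI (c m.-1.+1)) d.-1.
  by move: Qk Qm'; rewrite /Q => Qk /eqP ->.
have hsm : sumn (seqI (c m.-1.+1)) <= (sumn (seqI (c m.-1))).+1 by lia.
case: (all2_last (hsz _ (ltnW hk)) hd (hstep _ hk).1 hsm ne) => E1 E2.
move/eqP: Qm' => Qm'.
exists m.-1; split.
- lia.
- move=> h hh; rewrite hPQ; last lia.
  by apply/negP => Qh; have := minm h Qh; lia.
- move=> h /andP[h1 h2]; rewrite hPQ //.
  have -> : h = m + (h - m) by lia.
  apply: Qup; lia.
- lia.
- by rewrite E1 Qm'.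
Qed.
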